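(* Let $G$ be a cop-win graph of corner rank $\alpha$. Every vertex of corner rank $k>1$ has at least one neighbor of corner rank $k-1$. In particular, if for some $k<\alpha$ there is exactly one vertex $v$ of corner rank $k$, then $v$ is adjacent to every vertex of corner rank $k+1$.
   Context: All graphs are finite, nonempty, and reflexive (every vertex has a loop). $N[v]$ is the closed neighborhood of $v$ (including $v$). For distinct $v,w$, $w$ strictly corners $v$ if $N[v]\subsetneq N[w]$; $v$ is then a strict corner. Corner ranking: set $G^{(1)}=G$, $k=1$. If $G^{(k)}$ is a clique, give all its vertices rank $k$ and stop. Else if $G^{(k)}$ has no strict corners, give all its vertices rank $\infty$ and stop. Else give every strict corner of $G^{(k)}$ rank $k$, delete them to get $G^{(k+1)}$ (induced subgraph), increase $k$ and repeat. The corner rank of $G$ is the largest rank of a vertex; cop-win graphs are exactly those of finite corner rank. Standing assumption: $\alpha\ge 2$. *)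

(* Defs.v *)
From mathcomp Require Import all_boot.
Set Implicit Arguments. Unset Strict Implicit. Unset Printing Implicit Defensive.

(* A finite reflexive graph: vertex type T : finType, adjacency e : rel T,
   assumed reflexive and symmetric (hypotheses of the theorem). *)
Section CornerRank.
Variables (T : finType) (e : rel T).

Definition nbhd (S : {set T}) (v : T) : {set T} := [set u in S | e v u].

Definition is_clique (S : {set T}) : bool :=
  [forall x in S, forall y in S, e x y].

Definition strict_corner (S : {set T}) (v : T) : bool :=
  (v \in S) && [exists w in S, (w != v) && (nbhd S v \proper nbhd S w)].

Definition corners (S : {set T}) : {set T} := [set v | strict_corner S v].

(* If there are no strict corners the set is unchanged forever, so its
   vertices are never removed (rank infinity). *)
Definition rank_step (S : {set T}) : {set T} :=
  if is_clique S then set0 else S :\: corners S.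

(* G^(k+1) (the graph at round k+1, as a vertex set) *)
Definition stage (k : nat) : {set T} := iter k rank_step setT.

Definition has_rank (v : T) (k : nat) : Prop :=
  0 < k /\ v \in stage k.-1 /\ v \notin stage k.

Definition cop_win : Prop := forall v, exists k, has_rank v k.

Definition corner_rank_of_graph (alpha : nat) : Prop :=
  (exists v, has_rank v alpha) /\ (forall v k, has_rank v k -> k <= alpha).

End CornerRank.

(* Main.v *)
Require Import Defs.
From mathcomp Require Import all_boot.
Set Implicit Arguments.

Section K.
Variables (T : finType) (e : rel T) (hrefl : reflexive e) (hsym : symmetric e).

Lemma corner_of (S : {set T}) v w : w \in S -> nbhd e S v \proper nbhd e S w ->
  v \in S -> strict_corner e S v.
Proof.
move=> wS pr vS; rewrite /strict_corner vS /=; apply/existsP; exists w.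
rewrite wS pr andbT /=; apply/eqP => wv; subst w.
by move/properP: pr => [_ [x xi xn]]; rewrite xi in xn.
Qed.

Lemma key (S : {set T}) v : v \in rank_step e S -> v \notin rank_step e (rank_step e S) ->
  exists w, e v w /\ w \in S /\ w \notin rank_step e S.
Proof.
case cS: (is_clique e S); first by rewrite /rank_step cS in_set0.
have -> : rank_step e S = S :\: corners e S by rewrite /rank_step cS.
set S' := S :\: corners e S.
move=> vS' vN.
have S'S : S' \subset S by apply: subsetDl.
have vS : v \in S by apply: (subsetP S'S).
have inS' x : (x \in S') = (x \in S) && ~~ strict_corner e S x.
  by rewrite /S' in_setD /corners in_set andbC.
have vnc : ~~ strict_corner e S v by move: vS'; rewrite inS' => /andP[].
case: (boolP [exists w, [&& e v w, w \in S & w \notin S']]).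
  by move=> /existsP[w /and3P[? ? ?]]; exists w.
move=> /existsPn H; exfalso.
have nvE : nbhd e S v = nbhd e S' v.
  apply/setP => x; rewrite /nbhd !in_set [_ && (x \in S)]andbC -inS'.
  case xS': (x \in S'); first by rewrite (subsetP S'S).
  move: (H x); rewrite xS' andbT.
  by case: (e v x); case: (x \in S).
suff [w wS pr] : exists2 w, w \in S & nbhd e S v \proper nbhd e S w.
  by move: vnc; rewrite (corner_of wS pr vS).
move: vN; rewrite /rank_step; case cS': (is_clique e S').
  move=> _.
  have cl : forall x y, x \in S' -> y \in S' -> e x y.
    move=> x y xS yS; move/forall_inP: cS' => /(_ x xS) /forall_inP /(_ y yS).
    done.
  case: (pickP [pred u | (u \in S) && (u \notin S')]); last first.
    move=> none.
    have SE : S' = S.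
      apply/setP => x; apply/idP/idP; first by apply: (subsetP S'S).
      by move=> xS; move: (none x) => /= /negbT; rewrite xS /= negbK.
    by rewrite SE cS in cS'.
  move=> u /= /andP[uS uS'].
  have P0 : (fun m => (m \in S) && (nbhd e S u \subset nbhd e S m)) u.
    by rewrite /= uS subxx.
  case: (@arg_maxnP T u (fun m => (m \in S) && (nbhd e S u \subset nbhd e S m)) (fun m => #|nbhd e S m|) P0) => m /andP[mS sub] mx.
  have mS' : m \in S'.
    rewrite inS' mS /=; apply/negP => /andP[_ /exists_inP[w wS /andP[_ pr]]].
    have := mx w; rewrite wS (subset_trans sub (proper_sub pr)) => /(_ isT).
    by rewrite /geq /= leqNgt (proper_card pr).
  exists m => //; rewrite nvE; apply/properP; split.
    apply/subsetP => x /setIdP[xS' _]; apply/setIdP; split.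
      exact: (subsetP S'S).
    exact: cl.
  exists u.
    by apply: (subsetP sub); rewrite /nbhd in_set uS hrefl.
  by rewrite /nbhd in_set (negbTE uS').
rewrite in_setD vS' andbT in_set negbK => /andP[_ /exists_inP[w wS' /andP[_ pr]]].
exists w; first by apply: (subsetP S'S).
rewrite nvE; apply: (proper_sub_trans pr); apply/subsetP => x.
move=> /setIdP[xS ew]; apply/setIdP; split=> //; exact: (subsetP S'S).
Qed.

End K.

Theorem corollary3p17 (T : finType) (e : rel T) (alpha : nat)
  (hne : 0 < #|T|) (hrefl : reflexive e) (hsym : symmetric e)
  (hcop : cop_win e) (halpha : corner_rank_of_graph e alpha)
  (halpha2 : 2 <= alpha) :
  (forall (v : T) (k : nat), has_rank e v k -> 1 < k ->
     exists w : T, e v w /\ has_rank e w k.-1) /\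
  (forall (k : nat) (v : T), k < alpha -> has_rank e v k ->
     (forall u : T, has_rank e u k -> u = v) ->
     forall w : T, has_rank e w k.+1 -> e v w).
Proof.
have P1 : forall (v : T) (k : nat), has_rank e v k -> 1 < k ->
     exists w : T, e v w /\ has_rank e w k.-1.
  move=> v [|[|k]] // [_ [h1 h2]] _.
  move: h1 h2; rewrite /stage /= => h1 h2.
  have [w [evw [wS wN]]] := key hrefl _ h1 h2.
  by exists w; split=> //; split.
split=> // k v _ hv huniq w hw.
have [|u [ewu hu]] := P1 w k.+1 hw; first by case: hv.
by rewrite (huniq u hu) hsym in ewu.
Qed.
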